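(* There exists an absolute constant $C_1$ such that the following holds. Let $K\ge1$, let $d\ge2$ be an integer, and let $R_1,R_2$ be $K$-squares which are both contained in a square $R_3\subset[0,1]^2$ of side length $K^{-1/2^d}$ but are not both contained in any square of side length $K^{-1/2^{d-1}}$. Then the set $\mathrm{Reach}_{lin}(R_1,R_2,R_3)$ intersects at most $C_1K$ of the squares in $\{2R:R\in\mathcal{C}_K\}$.
   Context: A $K$-square is a square in $[0,1]^2$ of side length $1/K$; $\mathcal{C}_K$ is the collection of dyadic $K$-squares; for $R\in\mathcal{C}_K$, $2R$ is the square with the same center as $R$ and twice the side length. For squares $R_1,R_2,R_3\subset[0,1]^2$, $\mathrm{Reach}_{lin}(R_1,R_2,R_3)$ is the set of $(x,y)\in R_3$ such that either $(x,y),(x_1,y_1),(x_2,y_2)$ are collinear for some $(x_1,y_1)\in R_1$, $(x_2,y_2)\in R_2$, or $y=y_1$ for some $(x_1,y_1)\in R_1$. *)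

(* Defs.v *)
From Stdlib Require Import Reals Lra List.
Open Scope R_scope.

Definition sq (a b s : R) (p : R * R) : Prop :=
  a <= fst p <= a + s /\ b <= snd p <= b + s.

Definition in_unit (a b s : R) : Prop :=
  0 <= a /\ a + s <= 1 /\ 0 <= b /\ b + s <= 1.

Definition subset (A B : R * R -> Prop) : Prop := forall p, A p -> B p.

Definition collinear (p q r : R * R) : Prop :=
  (fst q - fst p) * (snd r - snd p) - (fst r - fst p) * (snd q - snd p) = 0.

Definition reach_lin (R1 R2 R3 : R * R -> Prop) (p : R * R) : Prop :=
  R3 p /\
  ((exists p1 p2, R1 p1 /\ R2 p2 /\ collinear p p1 p2) \/
   (exists p1, R1 p1 /\ snd p = snd p1)).

Definition grid_sq (K : R) (ij : nat * nat) : R * R -> Prop :=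
  sq (INR (fst ij) / K) (INR (snd ij) / K) (/ K).

Definition in_CK (K : R) (ij : nat * nat) : Prop :=
  in_unit (INR (fst ij) / K) (INR (snd ij) / K) (/ K).

(* 2R for R = grid_sq K ij: same center, twice the side length. *)
Definition double_grid_sq (K : R) (ij : nat * nat) : R * R -> Prop :=
  sq (INR (fst ij) / K - / (2 * K)) (INR (snd ij) / K - / (2 * K)) (2 / K).

(* Main.v *)
Require Import Defs.
From Stdlib Require Import Reals Lra List ZArith Lia ClassicalEpsilon.
Open Scope R_scope.

Lemma Rabs_le_inv x a : Rabs x <= a -> - a <= x <= a.
Proof. unfold Rabs; destruct (Rcase_abs x); lra. Qed.

Definition fl (x : R) : nat := Z.to_nat (up x - 1).

Lemma fl_spec x : 0 <= x -> INR (fl x) <= x < INR (fl x) + 1.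
Proof.
  intro Hx. destruct (archimed x) as [H1 H2].
  assert (Hp : (0 < up x)%Z) by (apply lt_0_IZR; lra).
  unfold fl. rewrite INR_IZR_INZ, Z2Nat.id by lia. rewrite minus_IZR. simpl. lra.
Qed.

Lemma count_pairs (l : list (nat * nat)) (lo1 N1 N2 : nat) (lo2 : nat -> nat) :
  NoDup l ->
  (forall i j, In (i, j) l -> (lo1 <= i < lo1 + N1 /\ lo2 i <= j < lo2 i + N2)%nat) ->
  (length l <= N1 * N2)%nat.
Proof.
  intros ND H.
  set (g := fun p : nat * nat => (fst p, (snd p - lo2 (fst p))%nat)).
  assert (ND' : NoDup (map g l)).
  { apply NoDup_map_NoDup_ForallPairs; auto.
    intros [i j] [i' j'] Hi Hi' E. unfold g in E; simpl in E. injection E as E1 E2.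
    subst i'. apply H in Hi. apply H in Hi'. f_equal. lia. }
  assert (Hinc : incl (map g l) (list_prod (seq lo1 N1) (seq 0 N2))).
  { intros q Hq. apply in_map_iff in Hq. destruct Hq as [[i j] [<- Hin]].
    apply H in Hin. unfold g; simpl. apply in_prod; apply in_seq; lia. }
  pose proof (NoDup_incl_length ND' Hinc) as L.
  rewrite length_map, length_prod, !length_seq in L. exact L.
Qed.

Lemma count2R (l : list (nat * nat)) (al A B : R) (be : nat -> R) :
  NoDup l -> 0 <= A -> 0 <= B ->
  (forall i j, In (i, j) l ->
     al <= INR i <= al + A /\ be i <= INR j <= be i + B) ->
  INR (length l) <= (A + 2) * (B + 2).
Proof.
  intros ND HA HB H.
  set (lo1 := fl (Rmax al 0)). set (N1 := fl A).
  set (lo2 := fun i => fl (Rmax (be i) 0)). set (N2 := fl B).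
  assert (Hm : forall x, 0 <= Rmax x 0 /\ x <= Rmax x 0)
    by (intro x; split; [apply Rmax_r | apply Rmax_l]).
  assert (Hmx : forall x y, x <= y -> 0 <= y -> Rmax x 0 <= y)
    by (intros; apply Rmax_lub; auto).
  assert (Hle : (length l <= (N1 + 2) * (N2 + 2))%nat).
  { apply count_pairs with (lo1 := lo1) (lo2 := lo2); auto.
    intros i j Hin. destruct (H i j Hin) as [[Hi1 Hi2] [Hj1 Hj2]].
    destruct (fl_spec (Rmax al 0) (proj1 (Hm al))) as [F1 F2].
    destruct (fl_spec A HA) as [F3 F4].
    destruct (fl_spec (Rmax (be i) 0) (proj1 (Hm (be i)))) as [F5 F6].
    destruct (fl_spec B HB) as [F7 F8].
    pose proof (pos_INR i). pose proof (pos_INR j).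
    pose proof (Hm al). pose proof (Hm (be i)).
    pose proof (Hmx al (INR i) Hi1 (pos_INR i)).
    pose proof (Hmx (be i) (INR j) Hj1 (pos_INR j)).
    unfold lo2, lo1, N1, N2.
    split; split.
    - apply INR_le. lra.
    - apply INR_lt. rewrite plus_INR, plus_INR. simpl. lra.
    - apply INR_le. lra.
    - apply INR_lt. rewrite plus_INR, plus_INR. simpl. lra. }
  apply le_INR in Hle. rewrite mult_INR, !plus_INR in Hle. simpl in Hle.
  destruct (fl_spec A HA). destruct (fl_spec B HB).
  eapply Rle_trans; [exact Hle|].
  apply Rmult_le_compat; unfold N1, N2 in *; pose proof (pos_INR (fl A)); pose proof (pos_INR (fl B)); lra.
Qed.

Lemma count2R_swap (l : list (nat * nat)) (al A B : R) (be : nat -> R) :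
  NoDup l -> 0 <= A -> 0 <= B ->
  (forall i j, In (i, j) l ->
     al <= INR j <= al + A /\ be j <= INR i <= be j + B) ->
  INR (length l) <= (A + 2) * (B + 2).
Proof.
  intros ND HA HB H.
  set (sw := fun p : nat * nat => (snd p, fst p)).
  replace (length l) with (length (map sw l)) by apply length_map.
  apply (count2R _ al A B be); auto.
  - apply NoDup_map_NoDup_ForallPairs; auto.
    intros [i j] [i' j'] _ _ E. unfold sw in E; simpl in E. injection E; intros; subst; auto.
  - intros i j Hin. apply in_map_iff in Hin. destruct Hin as [[a b] [E Hin]].
    unfold sw in E; simpl in E. injection E; intros; subst. apply H; auto.
Qed.

Lemma slope_le1 Db D : D <> 0 -> Rabs Db <= Rabs D -> Rabs (Db / D) <= 1.
Proof.
  intros HD H. unfold Rdiv; rewrite Rabs_mult, Rabs_inv.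
  assert (0 < Rabs D) by (apply Rabs_pos_lt; auto).
  apply (Rmult_le_reg_r (Rabs D)); auto.
  rewrite Rmult_assoc, Rinv_l by lra. lra.
Qed.

Lemma line_bound (a1 b1 a2 b2 u s x1 y1 x2 y2 px py : R) :
  0 < u -> 0 < s -> 4*u <= s*s -> s*s - u < Rabs (a2-a1) ->
  Rabs (b2-b1) <= Rabs (a2-a1) ->
  a1 <= x1 <= a1+u -> b1 <= y1 <= b1+u -> a2 <= x2 <= a2+u -> b2 <= y2 <= b2+u ->
  Rabs (px - x1) <= s ->
  (x2-x1)*(py-y1) = (y2-y1)*(px-x1) ->
  Rabs (py - (b1 + (px - a1)*((b2-b1)/(a2-a1)))) <= 2*u + 4*u/s.
Proof.
  intros Hu Hs Hss HD Hb Hx1 Hy1 Hx2 Hy2 Hp Hcol.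
  assert (HD0 : a2 - a1 <> 0) by (intro E; rewrite E, Rabs_R0 in HD; lra).
  assert (Hdx : Rabs (a2-a1) - u <= Rabs (x2-x1)).
  { pose proof (Rabs_triang_inv (a2-a1) (x2-x1)).
    assert (Rabs (a2 - a1 - (x2 - x1)) <= u) by (apply Rabs_le; lra). lra. }
  assert (Hdx0 : x2 - x1 <> 0) by (intro E; rewrite E, Rabs_R0 in Hdx; lra).
  set (m0 := (b2-b1)/(a2-a1)).
  assert (Hm0 : Rabs m0 <= 1) by (apply slope_le1; auto).
  set (q := (y2-y1)/(x2-x1) - m0).
  assert (Hq : (x2-x1)*(a2-a1)*q =
               ((y2-b2)-(y1-b1))*(a2-a1) - (b2-b1)*((x2-a2)-(x1-a1))).
  { unfold q, m0. field. split; auto. }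
  assert (Hn : Rabs (((y2-b2)-(y1-b1))*(a2-a1) - (b2-b1)*((x2-a2)-(x1-a1)))
               <= u * Rabs (a2-a1) + Rabs (b2-b1) * u).
  { unfold Rminus at 1. eapply Rle_trans; [apply Rabs_triang|].
    rewrite Rabs_Ropp, !Rabs_mult.
    assert (Rabs (y2 - b2 - (y1 - b1)) <= u) by (apply Rabs_le; lra).
    assert (Rabs (x2 - a2 - (x1 - a1)) <= u) by (apply Rabs_le; lra).
    pose proof (Rabs_pos (a2-a1)). pose proof (Rabs_pos (b2-b1)).
    apply Rplus_le_compat; apply Rmult_le_compat; auto using Rabs_pos; lra. }
  rewrite <- Hq, !Rabs_mult in Hn.
  pose proof (Rabs_pos q). pose proof (Rabs_pos (x2-x1)).
  assert (H1 : Rabs (x2-x1) * Rabs q <= 2*u).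
  { assert (HA : 0 < Rabs (a2-a1)) by lra. nra. }
  assert (H2 : s*s*Rabs q <= 4*u) by nra.
  assert (H3 : s * Rabs q <= 4*u/s).
  { replace (s * Rabs q) with (s*s*Rabs q * /s) by (field; lra).
    unfold Rdiv. apply Rmult_le_compat_r; [apply Rlt_le, Rinv_0_lt_compat; lra | lra]. }
  assert (HE : py - (b1 + (px - a1)*m0) = (y1 - b1) + (px-x1)*q - (x1-a1)*m0).
  { assert (py - y1 = (y2-y1)*(px-x1)/(x2-x1)) by (rewrite <- Hcol; field; auto).
    unfold q. replace py with (y1 + (y2-y1)*(px-x1)/(x2-x1)) by lra. field. auto. }
  fold m0. rewrite HE.
  unfold Rminus at 1. eapply Rle_trans; [apply Rabs_triang|].
  rewrite Rabs_Ropp. eapply Rle_trans; [apply Rplus_le_compat_r, Rabs_triang|].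
  rewrite !Rabs_mult.
  assert (Rabs (y1 - b1) <= u) by (apply Rabs_le; lra).
  assert (Rabs (x1 - a1) <= u) by (apply Rabs_le; lra).
  assert (Rabs (px - x1) * Rabs q <= s * Rabs q) by (apply Rmult_le_compat_r; auto).
  assert (Rabs (x1 - a1) * Rabs m0 <= u * 1)
    by (apply Rmult_le_compat; auto using Rabs_pos).
  lra.
Qed.

Lemma Rp_facts K d : 1 <= K -> (2 <= d)%nat ->
  0 < Rpower K (- / 2 ^ d) /\ Rpower K (- / 2 ^ d) <= 1 /\
  Rpower K (- / 2 ^ (d - 1)) = Rpower K (- / 2 ^ d) * Rpower K (- / 2 ^ d) /\
  / K <= Rpower K (- / 2 ^ d) /\
  (16 <= K -> 4 * / K <= Rpower K (- / 2 ^ (d - 1))) /\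
  Rpower K (- / 2 ^ (d - 1)) <= 1.
Proof.
  intros HK Hd.
  assert (HK0 : 0 < K) by lra.
  assert (P2 : forall n, 0 < 2 ^ n) by (intro; apply pow_lt; lra).
  assert (P1 : forall n, 1 <= 2 ^ n) by (intro; apply pow_R1_Rle; lra).
  assert (Hinv : forall n, / 2 ^ n <= 1).
  { intro n. rewrite <- Rinv_1. apply Rinv_le_contravar; auto; lra. }
  assert (Hpos : forall y, 0 < Rpower K y) by (intro; unfold Rpower; apply exp_pos).
  assert (Hle1 : forall y, y <= 0 -> Rpower K y <= 1).
  { intros y Hy. rewrite <- (Rpower_O K HK0). apply Rle_Rpower; auto. }
  assert (Hm1 : Rpower K (Ropp 1) = / K) by (rewrite Rpower_Ropp, Rpower_1; auto).
  destruct d as [|d']; [lia|].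
  replace (S d' - 1)%nat with d' by lia.
  assert (E : 2 ^ S d' = 2 * 2 ^ d') by reflexivity.
  pose proof (P2 d'). pose proof (Hinv d'). pose proof (Rinv_0_lt_compat _ (P2 d')).
  repeat split.
  - apply Hpos.
  - apply Hle1. pose proof (Rinv_0_lt_compat _ (P2 (S d'))). lra.
  - rewrite <- Rpower_plus. f_equal. rewrite E. field. lra.
  - rewrite <- Hm1. apply Rle_Rpower; auto. pose proof (Hinv (S d')). lra.
  - intro H16.
    set (t := Rpower K (- / 2)).
    assert (Ht : t * t = / K) by (unfold t; rewrite <- Rpower_plus, <- Hm1; f_equal; field).
    assert (Htp : 0 < t) by apply Hpos.
    assert (Hts : t <= Rpower K (- / 2 ^ d')).
    { apply Rle_Rpower; auto.
      destruct d' as [|d'']; [lia|].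
      assert (2 ^ S d'' = 2 * 2 ^ d'') by reflexivity.
      pose proof (P1 d''). apply Ropp_le_contravar. apply Rinv_le_contravar; lra. }
    assert (/ K <= / 16) by (apply Rinv_le_contravar; lra).
    assert (t <= / 4) by nra.
    nra.
  - apply Hle1. lra.
Qed.

Lemma Rabs_le_inv' x a : Rabs x <= a -> - a <= x <= a.
Proof. unfold Rabs; destruct (Rcase_abs x); lra. Qed.

Lemma separation a1 b1 a2 b2 u S : 0 < u -> S <= 1 ->
  in_unit a1 b1 u -> in_unit a2 b2 u ->
  ~ (exists a b, in_unit a b S /\ subset (sq a1 b1 u) (sq a b S) /\ subset (sq a2 b2 u) (sq a b S)) ->
  S - u < Rabs (a2 - a1) \/ S - u < Rabs (b2 - b1).
Proof.
  intros Hu HS [A1 [A2 [A3 A4]]] [B1 [B2 [B3 B4]]] Hn.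
  destruct (Rlt_le_dec (S - u) (Rabs (a2 - a1))) as [H|Ha]; [left; auto|].
  destruct (Rlt_le_dec (S - u) (Rabs (b2 - b1))) as [H|Hb]; [right; auto|].
  exfalso. apply Hn.
  apply Rabs_le_inv' in Ha. apply Rabs_le_inv' in Hb.
  exists (Rmin (Rmin a1 a2) (1 - S)), (Rmin (Rmin b1 b2) (1 - S)).
  assert (M : forall x y, Rmin x y <= x /\ Rmin x y <= y /\ (Rmin x y = x \/ Rmin x y = y)).
  { intros x y. unfold Rmin. destruct (Rle_dec x y); repeat split; auto; lra. }
  destruct (M (Rmin a1 a2) (1 - S)) as [Ma1 [Ma2 Ma3]].
  destruct (M a1 a2) as [Mb1 [Mb2 Mb3]].
  destruct (M (Rmin b1 b2) (1 - S)) as [Mc1 [Mc2 Mc3]].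
  destruct (M b1 b2) as [Md1 [Md2 Md3]].
  assert (X1 : Rmin (Rmin a1 a2) (1 - S) + S >= a1 + u /\ Rmin (Rmin a1 a2) (1 - S) + S >= a2 + u)
    by (destruct Ma3 as [E|E]; rewrite E; [destruct Mb3 as [E'|E']; rewrite E'|]; lra).
  assert (X2 : Rmin (Rmin b1 b2) (1 - S) + S >= b1 + u /\ Rmin (Rmin b1 b2) (1 - S) + S >= b2 + u)
    by (destruct Mc3 as [E|E]; rewrite E; [destruct Md3 as [E'|E']; rewrite E'|]; lra).
  assert (X3 : 0 <= Rmin (Rmin a1 a2) (1 - S))
    by (destruct Ma3 as [E|E]; rewrite E; [destruct Mb3 as [E'|E']; rewrite E'|]; lra).
  assert (X4 : 0 <= Rmin (Rmin b1 b2) (1 - S))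
    by (destruct Mc3 as [E|E]; rewrite E; [destruct Md3 as [E'|E']; rewrite E'|]; lra).
  unfold in_unit, subset, sq. repeat split; intros; lra.
Qed.

Lemma dbl_conv K u X px : 0 < K -> u = / K ->
  X / K - / (2 * K) <= px <= X / K - / (2 * K) + 2 / K ->
  X * u - u / 2 <= px <= X * u + 3 * u / 2 /\ px * K - 3 / 2 <= X <= px * K + 1 / 2.
Proof.
  intros HK Hu H.
  assert (E1 : X / K - / (2 * K) = X * u - u / 2) by (subst; field; lra).
  assert (E2 : 2 / K = 2 * u) by (subst; field; lra).
  rewrite E1, E2 in H.
  assert (HuK : u * K = 1) by (subst; field; lra).
  assert ((X * u - u / 2) * K <= px * K) by (apply Rmult_le_compat_r; lra).
  assert (px * K <= (X * u - u / 2 + 2 * u) * K) by (apply Rmult_le_compat_r; lra).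
  assert (X * u * K = X) by (subst; field; lra).
  split; [lra|]. split; nra.
Qed.

Lemma ck_conv K X Y : 0 < K -> in_unit (X / K) (Y / K) (/ K) -> X <= K - 1 /\ Y <= K - 1.
Proof.
  intros HK [A1 [A2 [A3 A4]]].
  assert ((X / K + / K) * K <= 1 * K) by (apply Rmult_le_compat_r; lra).
  assert ((Y / K + / K) * K <= 1 * K) by (apply Rmult_le_compat_r; lra).
  assert ((X / K + / K) * K = X + 1) by (field; lra).
  assert ((Y / K + / K) * K = Y + 1) by (field; lra).
  lra.
Qed.

Lemma mulK x y K : x <= y -> 0 < K -> x * K <= y * K.
Proof. intros; apply Rmult_le_compat_r; lra. Qed.

Lemma final_arith s K W u : 0 < s -> s <= 1 -> 1 <= K -> / K <= s -> u = / K ->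
  W = 2 * u + 4 * u / s ->
  (s * K + 2 + 2) * (2 * (W * K) + 5 + 2) <= 95 * K.
Proof.
  intros Hs Hs1 HK HsK Hu HW.
  set (t := / s).
  assert (HWK : W * K = 2 + 4 * t) by (subst; unfold t; field; split; lra).
  assert (Hst : s * t = 1) by (unfold t; field; lra).
  assert (Ht : t <= K).
  { unfold t. replace K with (/ / K) by (field; lra).
    apply Rinv_le_contravar; auto. apply Rinv_0_lt_compat; lra. }
  assert (0 < t) by (unfold t; apply Rinv_0_lt_compat; lra).
  rewrite HWK.
  replace ((s * K + 2 + 2) * (2 * (2 + 4 * t) + 5 + 2))
    with (11 * (s * K) + 8 * K * (s * t) + 44 + 32 * t) by ring.
  rewrite Hst. assert (s * K <= K) by nra. lra.
Qed.

Theorem lemma6p2 :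
  exists C1 : R,
  forall (K : R) (d : nat) (a1 b1 a2 b2 a3 b3 : R),
    1 <= K -> (2 <= d)%nat ->
    (* R1, R2 are K-squares (in [0,1]^2, side 1/K) *)
    in_unit a1 b1 (/ K) -> in_unit a2 b2 (/ K) ->
    (* R3 ⊂ [0,1]^2 has side K^(-1/2^d) *)
    in_unit a3 b3 (Rpower K (- / 2 ^ d)) ->
    subset (sq a1 b1 (/ K)) (sq a3 b3 (Rpower K (- / 2 ^ d))) ->
    subset (sq a2 b2 (/ K)) (sq a3 b3 (Rpower K (- / 2 ^ d))) ->
    (* not both contained in any square of side K^(-1/2^(d-1)) *)
    ~ (exists a b : R,
         in_unit a b (Rpower K (- / 2 ^ (d - 1))) /\
         subset (sq a1 b1 (/ K)) (sq a b (Rpower K (- / 2 ^ (d - 1)))) /\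
         subset (sq a2 b2 (/ K)) (sq a b (Rpower K (- / 2 ^ (d - 1))))) ->
    (* any family of distinct R ∈ C_K with 2R meeting Reach_lin has size ≤ C1 K *)
    forall l : list (nat * nat),
      NoDup l ->
      (forall ij, In ij l ->
         in_CK K ij /\
         exists p, double_grid_sq K ij p /\
           reach_lin (sq a1 b1 (/ K)) (sq a2 b2 (/ K))
                     (sq a3 b3 (Rpower K (- / 2 ^ d))) p) ->
      INR (length l) <= C1 * K.
Proof.
  exists 200.
  intros K d a1 b1 a2 b2 a3 b3 HK Hd H1 H2 H3 S1 S2 Hsep l ND Hl.
  destruct (Rp_facts K d HK Hd) as [Hs0 [Hs1 [HSs [HsK [H16 HS1]]]]].
  set (s := Rpower K (- / 2 ^ d)) in *.
  set (S := Rpower K (- / 2 ^ (d - 1))) in *.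
  set (u := / K) in *.
  assert (HK0 : 0 < K) by lra.
  assert (Hu : 0 < u) by (apply Rinv_0_lt_compat; lra).
  assert (HuK : u * K = 1) by (unfold u; field; lra).
  assert (C1 : a3 <= a1 /\ a1 + u <= a3 + s /\ b3 <= b1 /\ b1 + u <= b3 + s).
  { pose proof (S1 (a1, b1) ltac:(unfold sq; simpl; lra)) as P1.
    pose proof (S1 (a1 + u, b1 + u) ltac:(unfold sq; simpl; lra)) as P2.
    unfold sq in P1, P2; simpl in P1, P2. lra. }
  assert (Hall : forall i j, In (i, j) l -> INR i <= K - 1 /\ INR j <= K - 1).
  { intros i j Hin. destruct (Hl _ Hin) as [Hc _]. unfold in_CK in Hc; simpl in Hc.
    apply ck_conv; auto. }
  destruct (Rlt_le_dec K 16) as [Hk|Hk].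
  { eapply Rle_trans.
    - apply (count2R l 0 (K - 1) (K - 1) (fun _ => 0)); auto; try lra.
      intros i j Hin. destruct (Hall i j Hin). pose proof (pos_INR i). pose proof (pos_INR j). lra.
    - nra. }
  pose (P := fun ij : nat * nat => exists p, double_grid_sq K ij p /\ sq a3 b3 s p /\
               exists p1, sq a1 b1 u p1 /\ snd p = snd p1).
  pose (f := fun ij => if excluded_middle_informative (P ij) then true else false).
  rewrite <- (filter_length f l), plus_INR.
  assert (Part1 : INR (length (filter f l)) <= 10 * K).
  { eapply Rle_trans.
    - apply (count2R _ 0 (K - 1) 3 (fun _ => b1 * K - 3 / 2)); try lra.
      + apply NoDup_filter; auto.
      + intros i j Hin. apply filter_In in Hin as [Hin Hf].
        unfold f in Hf; destruct (excluded_middle_informative _) as [HP|]; [|discriminate].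
        destruct HP as [[px py] [Hdb [HR3 [[x1 y1] [HR1 Hy]]]]]. simpl in Hy.
        unfold double_grid_sq, sq in Hdb; simpl in Hdb. unfold sq in HR1; simpl in HR1.
        destruct (Hall i j Hin).
        destruct Hdb as [_ Hdb].
        destruct (dbl_conv K u (INR j) py HK0 eq_refl Hdb) as [_ Hj].
        assert (b1 * K <= py * K) by (apply mulK; lra).
        assert (py * K <= (b1 + u) * K) by (apply mulK; lra).
        pose proof (pos_INR i). lra.
    - lra. }
  assert (Part2 : INR (length (filter (fun x => negb (f x)) l)) <= 95 * K).
  { assert (Hcone : forall i j, In (i, j) (filter (fun x => negb (f x)) l) ->
      exists px py x1 y1 x2 y2,
        double_grid_sq K (i, j) (px, py) /\ sq a3 b3 s (px, py) /\
        sq a1 b1 u (x1, y1) /\ sq a2 b2 u (x2, y2) /\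
        (x2 - x1) * (py - y1) = (y2 - y1) * (px - x1)).
    { intros i j Hin. apply filter_In in Hin as [Hin Hf].
      unfold f in Hf; destruct (excluded_middle_informative _) as [|HnP]; [discriminate|].
      destruct (Hl _ Hin) as [_ [[px py] [Hdb [HR3 [Hc | Hst]]]]].
      - destruct Hc as [[x1 y1] [[x2 y2] [HR1 [HR2 Hcol]]]].
        exists px, py, x1, y1, x2, y2.
        split; [exact Hdb|split; [exact HR3|split; [exact HR1|split; [exact HR2|]]]].
        unfold collinear in Hcol; simpl in Hcol.
        assert (Z : (x2-x1)*(py-y1) - (y2-y1)*(px-x1) = (x1-px)*(y2-py) - (x2-px)*(y1-py)) by ring.
        lra.
      - exfalso. apply HnP. exists (px, py). split; [exact Hdb|split; [exact HR3|exact Hst]]. }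
    assert (HW4 : 4 * u <= s * s) by (rewrite <- HSs; apply H16; lra).
    assert (Hcase : (s*s - u < Rabs (a2-a1) /\ Rabs (b2-b1) <= Rabs (a2-a1)) \/
                    (s*s - u < Rabs (b2-b1) /\ Rabs (a2-a1) <= Rabs (b2-b1))).
    { destruct (separation a1 b1 a2 b2 u S Hu HS1 H1 H2 Hsep) as [Sa|Sb];
      rewrite HSs in *;
      destruct (Rle_dec (Rabs (b2 - b1)) (Rabs (a2 - a1))); [left|right|left|right]; split; lra. }
    destruct Hcase as [[Sa Hab]|[Sb Hab]].
    -
      assert (HD0 : a2 - a1 <> 0) by (intro E; rewrite E, Rabs_R0 in Sa; nra).
      set (m0 := (b2 - b1) / (a2 - a1)).
      assert (Hm0 : Rabs m0 <= 1) by (apply slope_le1; auto).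
      set (W := 2 * u + 4 * u / s).
      eapply Rle_trans.
      + apply (count2R _ (a3 * K - 3 / 2) (s * K + 2) (2 * (W * K) + 5)
                 (fun i => (b1 + (INR i * u - a1) * m0) * K - W * K - 3)).
        * apply NoDup_filter; auto.
        * nra.
        * assert (0 <= W) by (unfold W; assert (0 <= 4 * u / s) by (unfold Rdiv; apply Rmult_le_pos; [lra| apply Rlt_le, Rinv_0_lt_compat; lra]); lra).
          nra.
        * intros i j Hin.
          destruct (Hcone i j Hin) as [px [py [x1 [y1 [x2 [y2 [Hdb [HR3 [HR1 [HR2 Hcol]]]]]]]]]].
          unfold double_grid_sq, sq in Hdb; simpl in Hdb. unfold sq in HR1, HR2, HR3; simpl in HR1, HR2, HR3.
          destruct Hdb as [Hdx Hdy].
          destruct (dbl_conv K u (INR i) px HK0 eq_refl Hdx) as [Hix Hi].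
          destruct (dbl_conv K u (INR j) py HK0 eq_refl Hdy) as [Hjy Hj].
          assert (Hlb := line_bound a1 b1 a2 b2 u s x1 y1 x2 y2 px py Hu Hs0 HW4 Sa Hab
                     (proj1 HR1) (proj2 HR1) (proj1 HR2) (proj2 HR2)
                     ltac:(apply Rabs_le; lra) Hcol).
          fold m0 W in Hlb. apply Rabs_le_inv in Hlb.
          assert (HL : Rabs ((px - INR i * u) * m0) <= 3 * u / 2 * 1).
          { rewrite Rabs_mult. apply Rmult_le_compat; auto using Rabs_pos.
            apply Rabs_le; lra. }
          apply Rabs_le_inv in HL.
          set (Li := b1 + (INR i * u - a1) * m0).
          assert (py <= Li + W + 3 * u / 2) by (unfold Li; lra).
          assert (Li - W - 3 * u / 2 <= py) by (unfold Li; lra).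
          assert (py * K <= (Li + W + 3 * u / 2) * K) by (apply mulK; lra).
          assert ((Li - W - 3 * u / 2) * K <= py * K) by (apply mulK; lra).
          assert (a3 * K <= px * K) by (apply mulK; lra).
          assert (px * K <= (a3 + s) * K) by (apply mulK; lra).
          split; split; lra.
      + apply (final_arith s K W u); auto.
    -
      assert (HD0 : b2 - b1 <> 0) by (intro E; rewrite E, Rabs_R0 in Sb; nra).
      set (m1 := (a2 - a1) / (b2 - b1)).
      assert (Hm1 : Rabs m1 <= 1) by (apply slope_le1; auto; lra).
      set (W := 2 * u + 4 * u / s).
      eapply Rle_trans.
      + apply (count2R_swap _ (b3 * K - 3 / 2) (s * K + 2) (2 * (W * K) + 5)
                 (fun j => (a1 + (INR j * u - b1) * m1) * K - W * K - 3)).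
        * apply NoDup_filter; auto.
        * nra.
        * assert (0 <= W) by (unfold W; assert (0 <= 4 * u / s) by (unfold Rdiv; apply Rmult_le_pos; [lra| apply Rlt_le, Rinv_0_lt_compat; lra]); lra).
          nra.
        * intros i j Hin.
          destruct (Hcone i j Hin) as [px [py [x1 [y1 [x2 [y2 [Hdb [HR3 [HR1 [HR2 Hcol]]]]]]]]]].
          unfold double_grid_sq, sq in Hdb; simpl in Hdb. unfold sq in HR1, HR2, HR3; simpl in HR1, HR2, HR3.
          destruct Hdb as [Hdx Hdy].
          destruct (dbl_conv K u (INR i) px HK0 eq_refl Hdx) as [Hix Hi].
          destruct (dbl_conv K u (INR j) py HK0 eq_refl Hdy) as [Hjy Hj].
          assert (Hlb := line_bound b1 a1 b2 a2 u s y1 x1 y2 x2 py px Hu Hs0 HW4 Sb ltac:(lra)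
                     (proj2 HR1) (proj1 HR1) (proj2 HR2) (proj1 HR2)
                     ltac:(apply Rabs_le; lra) ltac:(lra)).
          fold m1 W in Hlb. apply Rabs_le_inv in Hlb.
          assert (HL : Rabs ((py - INR j * u) * m1) <= 3 * u / 2 * 1).
          { rewrite Rabs_mult. apply Rmult_le_compat; auto using Rabs_pos.
            apply Rabs_le; lra. }
          apply Rabs_le_inv in HL.
          set (Lj := a1 + (INR j * u - b1) * m1).
          assert (px <= Lj + W + 3 * u / 2) by (unfold Lj; lra).
          assert (Lj - W - 3 * u / 2 <= px) by (unfold Lj; lra).
          assert (px * K <= (Lj + W + 3 * u / 2) * K) by (apply mulK; lra).
          assert ((Lj - W - 3 * u / 2) * K <= px * K) by (apply mulK; lra).
          assert (b3 * K <= py * K) by (apply mulK; lra).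
          assert (py * K <= (b3 + s) * K) by (apply mulK; lra).
          split; split; lra.
      + apply (final_arith s K W u); auto.
  }
  lra.
Qed.
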